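(* Let $\alpha\in\mathbb{R}$ with $\alpha\neq0$, $\beta\ge0$, $0<\mu\le1$, and define $h(\lambda)=\frac{\lambda(\lambda+\beta)^\mu}{(\lambda+\beta)^\mu+\alpha}$ for $\lambda\in\mathbb{C}$ with $\operatorname{Re}(\lambda)>0$. Assume either (a) $\alpha>0$, or (b) $\alpha<0$ and $\alpha+\beta^\mu\ge|\alpha|$. Then $|\arg(h(\lambda))|\le(1+\mu)|\arg(\lambda)|$ for all $\lambda$ with $\operatorname{Re}(\lambda)>0$.
   Context: Complex powers $z^\mu$ and arguments are taken with the principal branch. *)

(* Defs.v *)
From Stdlib Require Import Reals.
From Coquelicot Require Import Coquelicot.
Open Scope R_scope.

(* Principal argument Arg z in (-PI, PI], with Arg 0 = 0 (atan2 convention). *)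
Definition Arg (z : C) : R :=
  let x := Re z in let y := Im z in
  if Rlt_dec 0 x then atan (y / x)
  else if Rlt_dec x 0 then
    (if Rle_dec 0 y then atan (y / x) + PI else atan (y / x) - PI)
  else if Rlt_dec 0 y then PI / 2
  else if Rlt_dec y 0 then - (PI / 2)
  else 0.

(* Principal power z^mu = exp(mu * Log z), Log z = ln|z| + i Arg z, for z <> 0;
   0^mu := 0. *)
Definition Cpow (z : C) (mu : R) : C :=
  if Ceq_dec z 0 then 0%C
  else (Rpower (Cmod z) mu * cos (mu * Arg z),
        Rpower (Cmod z) mu * sin (mu * Arg z)).

Definition h (alpha beta mu : R) (lam : C) : C :=
  (lam * Cpow (lam + RtoC beta) mu / (Cpow (lam + RtoC beta) mu + RtoC alpha))%C.

(* Real power x^mu for x >= 0, with 0^mu = 0 (mu > 0); Stdlib's Rpower 0 mu = 1. *)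
Definition rpow (x mu : R) : R := if Req_EM_T x 0 then 0 else Rpower x mu.

(* Main.v *)
Require Import Defs.
From Stdlib Require Import Reals Lra.
From Coquelicot Require Import Coquelicot.
Open Scope R_scope.

Lemma atan_le x y : x <= y -> atan x <= atan y.
Proof. intros [H|H]; [left; apply atan_increasing; auto| subst; lra]. Qed.

Lemma atan_abs u : Rabs (atan u) = atan (Rabs u).
Proof.
  destruct (Rle_lt_dec 0 u) as [H|H].
  - rewrite (Rabs_right u) by lra. apply Rabs_right.
    rewrite <- atan_0. apply Rle_ge, atan_le; lra.
  - rewrite (Rabs_left u) by lra. rewrite atan_opp. apply Rabs_left.
    rewrite <- atan_0. apply atan_increasing; lra.
Qed.

Lemma Arg_pos z : 0 < Re z -> Arg z = atan (Im z / Re z).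
Proof. intros H. unfold Arg. destruct (Rlt_dec 0 (Re z)); [reflexivity|lra]. Qed.

Lemma polar_pos z : 0 < Re z ->
  z = (Cmod z * cos (Arg z), Cmod z * sin (Arg z)).
Proof.
  intros H. rewrite Arg_pos by auto. destruct z as [x y]. simpl in *.
  rewrite cos_atan, sin_atan.
  assert (E : Cmod (x, y) = x * sqrt (1 + (y/x)²)).
  { unfold Cmod. simpl.
    replace (x * (x * 1) + y * (y * 1)) with ((x * x) * (1 + (y/x)²)) by (unfold Rsqr; field; lra).
    rewrite sqrt_mult_alt by nra. rewrite sqrt_square by lra. reflexivity. }
  assert (P : 0 < sqrt (1 + (y/x)²)).
  { apply sqrt_lt_R0. unfold Rsqr. nra. }
  rewrite E. f_equal; field; lra.
Qed.

Lemma polar_div a b s t r : 0 < b ->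
  Cdiv (Cmult ((a * cos s)%R, (a * sin s)%R) (RtoC r)) ((b * cos t)%R, (b * sin t)%R)
  = (a * r / b * cos (s - t), a * r / b * sin (s - t)).
Proof.
  intros Hb. rewrite cos_minus, sin_minus.
  pose proof (sin2_cos2 t) as E. unfold Rsqr in E.
  unfold Cdiv, Cmult, Cinv, RtoC; simpl.
  replace (b * cos t * (b * cos t * 1) + b * sin t * (b * sin t * 1)) with (b * b) by nra.
  f_equal; field; lra.
Qed.

Lemma Arg_polar rho t : 0 < rho -> -PI < t <= PI ->
  Arg (rho * cos t, rho * sin t) = t.
Proof.
  intros Hr Ht. pose proof PI_RGT_0 as HPI.
  assert (Tq : forall u, cos u <> 0 -> rho * sin u / (rho * cos u) = tan u).
  { intros u Hu. unfold tan. field. lra. }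
  destruct (Rlt_le_dec t (-(PI/2))) as [H1|H1].
  {
    assert (Hc : cos t < 0).
    { rewrite <- cos_neg. apply cos_lt_0; lra. }
    assert (Hs : sin t < 0).
    { rewrite <- (Ropp_involutive t), sin_neg. assert (0 < sin (-t)) by (apply sin_gt_0; lra). lra. }
    unfold Arg; simpl.
    destruct (Rlt_dec 0 (rho * cos t)); [nra|].
    destruct (Rlt_dec (rho * cos t) 0); [|nra].
    destruct (Rle_dec 0 (rho * sin t)); [nra|].
    rewrite Tq by lra.
    assert (E : tan t = tan (t + PI)).
    { unfold tan. rewrite neg_sin, neg_cos. field. lra. }
    rewrite E, atan_tan by lra. lra. }
  destruct (Req_dec t (-(PI/2))) as [H2|H2].
  { subst t. rewrite cos_neg, sin_neg, cos_PI2, sin_PI2.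
    unfold Arg; simpl.
    repeat destruct Rlt_dec; lra. }
  destruct (Rlt_le_dec t (PI/2)) as [H3|H3].
  { assert (Hc : 0 < cos t) by (apply cos_gt_0; lra).
    unfold Arg; simpl.
    destruct (Rlt_dec 0 (rho * cos t)); [|nra].
    rewrite Tq by lra. apply atan_tan; lra. }
  destruct (Req_dec t (PI/2)) as [H4|H4].
  { subst t. rewrite cos_PI2, sin_PI2.
    unfold Arg; simpl.
    repeat destruct Rlt_dec; lra. }
  assert (Hc : cos t < 0) by (apply cos_lt_0; lra).
  assert (Hs : 0 <= sin t) by (apply sin_ge_0; lra).
  unfold Arg; simpl.
  destruct (Rlt_dec 0 (rho * cos t)); [nra|].
  destruct (Rlt_dec (rho * cos t) 0); [|nra].
  destruct (Rle_dec 0 (rho * sin t)); [|nra].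
  rewrite Tq by lra.
  assert (E : tan t = tan (t - PI)).
  { unfold tan. replace t with ((t - PI) + PI) at 1 2 by ring.
    rewrite neg_sin, neg_cos. field.
    intro C0. assert (cos t = - cos (t - PI)).
    { replace t with ((t - PI) + PI) at 1 by ring. apply neg_cos. }
    lra. }
  rewrite E, atan_tan by lra. lra.
Qed.

Lemma Rabs_div_le a b c : 0 < b -> b <= c -> Rabs (a / c) <= Rabs (a / b).
Proof.
  intros Hb Hc. unfold Rdiv. rewrite !Rabs_mult, !Rabs_inv.
  rewrite (Rabs_right b), (Rabs_right c) by lra.
  apply Rmult_le_compat_l; [apply Rabs_pos|]. apply Rinv_le_contravar; lra.
Qed.

Theorem lemma3p3 (alpha beta mu : R) :
  alpha <> 0 -> 0 <= beta -> 0 < mu <= 1 ->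
  (0 < alpha \/ (alpha < 0 /\ alpha + rpow beta mu >= Rabs alpha)) ->
  forall lam : C, 0 < Re lam ->
    Rabs (Arg (h alpha beta mu lam)) <= (1 + mu) * Rabs (Arg lam).
Proof.
  intros Ha Hb Hmu Hcase lam Hlam.
  pose proof PI_RGT_0 as HPI.
  destruct lam as [x y]. simpl in Hlam.
  set (z := ((x, y) + RtoC beta)%C).
  assert (Hz : z = (x + beta, y)).
  { unfold z, RtoC, Cplus. simpl. f_equal; ring. }
  assert (HRez : 0 < Re z) by (rewrite Hz; simpl; lra).
  set (theta := Arg (x, y)).
  assert (Etheta : theta = atan (y / x)) by (unfold theta; rewrite Arg_pos; simpl; auto).
  set (phi := Arg z).
  assert (Ephi : phi = atan (y / (x + beta))) by (unfold phi; rewrite Arg_pos, Hz; simpl; auto).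
  assert (Htb : - PI / 2 < theta < PI / 2) by (rewrite Etheta; apply atan_bound).
  assert (Hpt : Rabs phi <= Rabs theta).
  { rewrite Ephi, Etheta, !atan_abs. apply atan_le. apply Rabs_div_le; lra. }
  set (R0 := Rpower (Cmod z) mu).
  assert (HR0 : 0 < R0) by (unfold R0, Rpower; apply exp_pos).
  set (psi := mu * phi).
  assert (Hpsi : Rabs psi <= mu * Rabs theta).
  { unfold psi. rewrite Rabs_mult, (Rabs_right mu) by lra.
    apply Rmult_le_compat_l; lra. }
  assert (Hpsi2 : Rabs psi < PI / 2).
  { assert (mu * Rabs theta <= Rabs theta) by (pose proof (Rabs_pos theta); nra).
    assert (Rabs theta < PI / 2) by (apply Rabs_def1; lra). lra. }
  assert (Hc : 0 < cos psi).
  { apply cos_gt_0; revert Hpsi2; unfold Rabs; destruct Rcase_abs; lra. }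
  assert (Hc1 : cos psi <= 1) by apply COS_bound.
  set (v := ((R0 + alpha * cos psi)%R, (- alpha * sin psi)%R) : C).
  assert (HRv : 0 < Re v /\ Rabs alpha * cos psi <= R0 + alpha * cos psi).
  { simpl. destruct Hcase as [Hp | [Hn Hr]].
    - rewrite Rabs_right by lra. nra.
    - rewrite Rabs_left in * by lra.
      assert (HR2 : - 2 * alpha < R0).
      { unfold rpow in Hr. destruct (Req_EM_T beta 0) as [E|E]; [lra|].
        assert (Rpower beta mu < R0).
        { unfold R0. apply Rlt_Rpower_l; [lra|]. split; [lra|].
          pose proof (re_le_Cmod z) as Hm. rewrite Hz in Hm |- *. simpl in Hm.
          rewrite Rabs_right in Hm by lra. lra. }
        lra. }
      nra. }
  destruct HRv as [HRv Hav].
  set (delta := Arg v).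
  assert (Edelta : delta = atan (- alpha * sin psi / (R0 + alpha * cos psi)))
    by (unfold delta; rewrite Arg_pos; simpl; auto).
  assert (Hdp : Rabs delta <= Rabs psi).
  { rewrite Edelta, atan_abs.
    replace (Rabs psi) with (atan (Rabs (tan psi))).
    2:{ rewrite <- atan_abs, atan_tan; auto. revert Hpsi2; unfold Rabs; destruct Rcase_abs; lra. }
    apply atan_le.
    unfold tan. unfold Rdiv. rewrite !Rabs_mult, !Rabs_inv, Rabs_Ropp.
    rewrite (Rabs_right (R0 + alpha * cos psi)) by (simpl in HRv; lra).
    rewrite (Rabs_right (cos psi)) by lra.
    set (S := Rabs (sin psi)). assert (0 <= S) by apply Rabs_pos.
    simpl in HRv.
    assert (E : Rabs alpha * S * / (R0 + alpha * cos psi) - S * / cos psi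
               = S * (Rabs alpha * cos psi - (R0 + alpha * cos psi))
                 * / ((R0 + alpha * cos psi) * cos psi)) by (field; lra).
    assert (0 < / ((R0 + alpha * cos psi) * cos psi))
      by (apply Rinv_0_lt_compat; nra).
    assert (S * (Rabs alpha * cos psi - (R0 + alpha * cos psi)) <= 0) by nra.
    nra. }
  assert (Hh : h alpha beta mu (x, y) = Cdiv (Cmult (x, y) (RtoC R0)) v).
  { unfold h. fold z. unfold Defs.Cpow.
    destruct (Ceq_dec z 0) as [E|E].
    { exfalso. rewrite E in HRez. simpl in HRez. lra. }
    fold R0 phi psi.
    set (e := (cos psi, sin psi) : C).
    pose proof (sin2_cos2 psi) as Es. unfold Rsqr in Es.
    assert (E1 : ((R0 * cos psi)%R, (R0 * sin psi)%R) = Cmult (RtoC R0) e).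
    { unfold e, RtoC, Cmult; simpl. f_equal; ring. }
    assert (E2 : Cplus ((R0 * cos psi)%R, (R0 * sin psi)%R) (RtoC alpha) = Cmult e v).
    { unfold e, v, RtoC, Cmult, Cplus; simpl. f_equal; nra. }
    rewrite E2, E1.
    assert (He : e <> 0%C).
    { intro E0. unfold e in E0. injection E0. intros. nra. }
    assert (Hv : v <> 0%C).
    { intro E0. rewrite E0 in HRv. simpl in HRv. lra. }
    field. auto. }
  rewrite Hh.
  assert (Hmodl : 0 < Cmod (x, y)).
  { pose proof (re_le_Cmod (x, y)) as Hm. simpl in Hm. rewrite Rabs_right in Hm; lra. }
  assert (Hmodv : 0 < Cmod v).
  { pose proof (re_le_Cmod v) as Hm. rewrite Rabs_right in Hm; lra. }
  rewrite (polar_pos (x, y)) at 1 by (simpl; lra).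
  rewrite (polar_pos v) at 1 by lra.
  fold theta delta.
  rewrite polar_div by lra.
  assert (Hfin : Rabs (theta - delta) <= (1 + mu) * Rabs theta).
  { unfold Rminus. eapply Rle_trans; [apply Rabs_triang|]. rewrite Rabs_Ropp. lra. }
  rewrite Arg_polar.
  - exact Hfin.
  - apply Rmult_lt_0_compat; [|apply Rinv_0_lt_compat; lra]. nra.
  - assert (Rabs theta < PI / 2) by (unfold Rabs; destruct Rcase_abs; lra).
    assert ((1 + mu) * Rabs theta < PI) by (pose proof (Rabs_pos theta); nra).
    revert Hfin. unfold Rabs at 1. destruct Rcase_abs; lra.
Qed.
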